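(* Let $F$ be a free group of finite rank $k$. Then (1) the strong capacity $SC(F)=k$ and the capacity $C(F)=k+1$; (2) the strong depth $SD(F)$ and the depth $D(F)$ are both equal to $k+1$.
   Context: All notions are in the category of groups. $X\leqslant^d A$ means there exist homomorphisms $f:X\to A$, $g:A\to X$ with $g\circ f=\mathrm{id}_X$. $X<^s A$ means $X\leqslant^d A$ holds but $A\leqslant^d X$ fails; $X<^p A$ means $X\leqslant^d A$ and $X\not\cong A$. The capacity $C(A)$ is the number of isomorphism classes of groups $X$ with $X\leqslant^d A$; the strong capacity $SC(A)$ is the number of isomorphism classes of groups $X$ with $X<^s A$. A chain of length $k$ for $A$ is $X_k<^p\cdots<^p X_1\leqslant^d A$, and an $s$-chain of length $k$ is $X_k<^s\cdots<^s X_1\leqslant^d A$; the depth $D(A)$ (resp. strong depth $SD(A)$) is the supremum of the lengths of all chains (resp. $s$-chains) for $A$. *)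

(* Defs.v *)
From Stdlib Require Import Arith.

Record group := Group {
  carrier :> Type;
  gmul : carrier -> carrier -> carrier;
  ginv : carrier -> carrier;
  gone : carrier;
  gmulA : forall x y z, gmul x (gmul y z) = gmul (gmul x y) z;
  gmul1x : forall x, gmul gone x = x;
  gmulx1 : forall x, gmul x gone = x;
  gmulVx : forall x, gmul (ginv x) x = gone;
  gmulxV : forall x, gmul x (ginv x) = gone
}.

Definition is_hom (G H : group) (f : G -> H) : Prop :=
  forall x y : G, f (gmul G x y) = gmul H (f x) (f y).

Definition isomorphic (G H : group) : Prop :=
  exists (f : G -> H) (g : H -> G),
    is_hom G H f /\ is_hom H G g /\
    (forall x, g (f x) = x) /\ (forall y, f (g y) = y).

Definition retract (X A : group) : Prop :=
  exists (f : X -> A) (g : A -> X),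
    is_hom X A f /\ is_hom A X g /\ (forall x, g (f x) = x).

Definition sretract (X A : group) : Prop := retract X A /\ ~ retract A X.

Definition pretract (X A : group) : Prop := retract X A /\ ~ isomorphic X A.

Definition free_on (F : group) (k : nat) (b : nat -> F) : Prop :=
  forall (G : group) (phi : nat -> G),
    (exists h : F -> G, is_hom F G h /\ forall i, i < k -> h (b i) = phi i) /\
    (forall h1 h2 : F -> G, is_hom F G h1 -> is_hom F G h2 ->
       (forall i, i < k -> h1 (b i) = h2 (b i)) -> forall x, h1 x = h2 x).

(* The number of isomorphism classes of groups satisfying P (assumed iso-invariant
   by the uses below) is exactly n. *)
Definition num_iso_classes (P : group -> Prop) (n : nat) : Prop :=
  exists Y : nat -> group,
    (forall i, i < n -> P (Y i)) /\
    (forall i j, i < n -> j < n -> isomorphic (Y i) (Y j) -> i = j) /\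
    (forall X, P X -> exists i, i < n /\ isomorphic X (Y i)).

Definition capacity (A : group) (n : nat) : Prop :=
  num_iso_classes (fun X => retract X A) n.
Definition strong_capacity (A : group) (n : nat) : Prop :=
  num_iso_classes (fun X => sretract X A) n.

(* A chain (w.r.t. the relation R) of length n for A:
   X_n R ... R X_1 <=^d A, groups indexed 1..n. *)
Definition chain_rel (R : group -> group -> Prop) (A : group) (n : nat) : Prop :=
  exists X : nat -> group,
    (0 < n -> retract (X 1) A) /\
    (forall i, 1 <= i -> i < n -> R (X (S i)) (X i)).

Definition chain := chain_rel pretract.
Definition schain := chain_rel sretract.

Definition sup_length (P : nat -> Prop) (n : nat) : Prop :=
  P n /\ forall m, P m -> m <= n.

Definition depth (A : group) (n : nat) : Prop := sup_length (chain A) n.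
Definition strong_depth (A : group) (n : nat) : Prop := sup_length (schain A) n.

(* Main.v *)
Require Import Defs.
From Stdlib Require Import Arith Lia List Bool Classical ProofIrrelevance ClassicalEpsilon.
Import ListNotations.


Definition letter := (nat * bool)%type.
Definition word := list letter.
Definition linv (a : letter) : letter := (fst a, negb (snd a)).

Lemma linv_inv a : linv (linv a) = a.
Proof. destruct a as [i e]; unfold linv; simpl; now rewrite negb_involutive. Qed.
Lemma linv_neq a : linv a <> a.
Proof. destruct a as [i e]; unfold linv; simpl; intro H; inversion H; destruct e; discriminate. Qed.
Lemma linv_inj a b : linv a = linv b -> a = b.
Proof. intro H. rewrite <- (linv_inv a), <- (linv_inv b), H. reflexivity. Qed.

Definition leq_dec (a b : letter) : {a = b} + {a <> b}.
Proof. decide equality; [apply bool_dec | apply Nat.eq_dec]. Qed.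

Definition push (a : letter) (w : word) : word :=
  match w with
  | b :: w' => if leq_dec b (linv a) then w' else a :: w
  | [] => [a]
  end.
Definition act (u v : word) : word := fold_right push v u.
Definition winv (w : word) : word := rev (map linv w).

Fixpoint reduced (w : word) : Prop :=
  match w with
  | a :: w' => match w' with b :: _ => b <> linv a | [] => True end /\ reduced w'
  | [] => True
  end.

Lemma reduced_tail a w : reduced (a :: w) -> reduced w.
Proof. simpl; tauto. Qed.

Lemma reduced_cons a w : reduced w -> (forall b w', w = b :: w' -> b <> linv a) -> reduced (a :: w).
Proof. intros H1 H2. simpl. split; auto. destruct w; auto. eapply H2; eauto. Qed.

Lemma push_red a w : reduced w -> reduced (push a w).
Proof.
  intros H. destruct w as [|b w']; simpl; auto.
  destruct (leq_dec b (linv a)); [eapply reduced_tail; eauto|].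
  apply reduced_cons; auto. intros c w'' E; inversion E; subst; auto.
Qed.

Lemma push_cancel a w : reduced w -> push (linv a) (push a w) = w.
Proof.
  intros H. destruct w as [|b w']; simpl.
  - rewrite linv_inv. destruct (leq_dec a a); congruence.
  - destruct (leq_dec b (linv a)) as [E|E].
    + subst b. destruct w' as [|c w'']; simpl; auto.
      destruct H as [H1 H2]. rewrite linv_inv in H1 |- *.
      destruct (leq_dec c a); congruence.
    + simpl. rewrite linv_inv. destruct (leq_dec a a); congruence.
Qed.

Lemma act_red u v : reduced v -> reduced (act u v).
Proof. intros H; induction u; simpl; auto using push_red. Qed.

Lemma act_app u v w : act (u ++ v) w = act u (act v w).
Proof. unfold act. apply fold_right_app. Qed.

Lemma act_push a v w : reduced w -> act (push a v) w = push a (act v w).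
Proof.
  intros H. destruct v as [|b v']; simpl; auto.
  destruct (leq_dec b (linv a)) as [E|E]; simpl; auto.
  subst b. pose proof (push_cancel (linv a) (act v' w)) as P. rewrite linv_inv in P.
  rewrite P; auto. apply act_red; auto.
Qed.

Lemma act_assoc u v w : reduced w -> act (act u v) w = act u (act v w).
Proof.
  intros H. induction u; simpl; auto. rewrite act_push; auto. congruence.
Qed.

Lemma act_nil_r u : reduced u -> act u [] = u.
Proof.
  induction u as [|a u IH]; simpl; auto. intros H.
  rewrite IH by (eapply reduced_tail; eauto).
  destruct u as [|b u']; simpl; auto.
  destruct (leq_dec b (linv a)); auto. destruct H; contradiction.
Qed.

Lemma reduced_app_single x b :
  reduced x -> (forall y c, x = y ++ [c] -> b <> linv c) -> reduced (x ++ [b]).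
Proof.
  induction x as [|a x IH]; intros H1 H2; simpl; auto.
  split.
  - destruct x as [|c x']; simpl.
    + apply (H2 []); auto.
    + destruct H1; auto.
  - apply IH. eapply reduced_tail; eauto.
    intros y c E. apply (H2 (a :: y)). simpl; congruence.
Qed.

Lemma winv_cons a w : winv (a :: w) = winv w ++ [linv a].
Proof. reflexivity. Qed.

Lemma winv_winv w : winv (winv w) = w.
Proof.
  unfold winv. rewrite map_rev, rev_involutive, map_map.
  erewrite map_ext; [apply map_id|]. apply linv_inv.
Qed.

Lemma winv_length w : length (winv w) = length w.
Proof. unfold winv. rewrite length_rev, length_map. auto. Qed.

Lemma winv_app u v : winv (u ++ v) = winv v ++ winv u.
Proof. unfold winv. rewrite map_app, rev_app_distr. auto. Qed.

Lemma winv_red w : reduced w -> reduced (winv w).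
Proof.
  induction w as [|a w IH]; intros H; simpl; auto.
  rewrite winv_cons. apply reduced_app_single.
  - apply IH; eapply reduced_tail; eauto.
  - intros y c E. destruct w as [|d w'].
    + simpl in E. destruct y; simpl in E; [discriminate| destruct y; discriminate].
    + rewrite winv_cons in E. apply app_inj_tail in E. destruct E as [_ E]. subst c.
      destruct H as [H _]. intro E. rewrite linv_inv in E. apply H. auto.
Qed.

Lemma act_inv_l x : reduced x -> act (winv x) x = [].
Proof.
  induction x as [|a x IH]; intros H; simpl; auto.
  rewrite winv_cons, act_app. simpl.
  rewrite linv_inv. destruct (leq_dec a a); [|congruence].
  apply IH. eapply reduced_tail; eauto.
Qed.

Lemma act_inv_r x : reduced x -> act x (winv x) = [].
Proof.
  intros H. rewrite <- (winv_winv x) at 1. apply act_inv_l, winv_red, H.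
Qed.

Lemma act_nil_l v : act [] v = v.
Proof. reflexivity. Qed.

Lemma winv_act x y : reduced x -> reduced y -> winv (act x y) = act (winv y) (winv x).
Proof.
  intros Hx Hy.
  set (z := act x y). set (a := act (winv y) (winv x)).
  assert (Hz : reduced z) by (apply act_red; auto).
  assert (Ha : reduced a) by (apply act_red, winv_red; auto).
  assert (E : act a z = []).
  { unfold a, z. rewrite act_assoc by auto. rewrite <- (act_assoc (winv x)) by auto.
    rewrite act_inv_l by auto. simpl. apply act_inv_l; auto. }
  rewrite <- (act_nil_r a) by auto. rewrite <- (act_inv_r z) by auto.
  rewrite <- act_assoc by (apply winv_red; auto). rewrite E. reflexivity.
Qed.


Fixpoint lcp (x y : word) : nat :=
  match x, y with
  | a :: x', b :: y' => if leq_dec a b then S (lcp x' y') else 0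
  | _, _ => 0
  end.

Lemma lcp_le_l x y : lcp x y <= length x.
Proof. revert y; induction x; destruct y; simpl; try lia. destruct leq_dec; simpl; [specialize (IHx y); lia|lia]. Qed.
Lemma lcp_le_r x y : lcp x y <= length y.
Proof. revert y; induction x; destruct y; simpl; try lia. destruct leq_dec; simpl; [specialize (IHx y); lia|lia]. Qed.
Lemma lcp_sym x y : lcp x y = lcp y x.
Proof. revert y; induction x; destruct y; simpl; auto. destruct (leq_dec a l), (leq_dec l a); subst; try congruence. Qed.
Lemma lcp_nth x y j d : j < lcp x y -> nth j x d = nth j y d.
Proof.
  revert y j; induction x; destruct y; simpl; try lia. intros j.
  destruct leq_dec; [|lia]. subst. destruct j; auto. intros; apply IHx; lia.
Qed.
Lemma lcp_firstn x y : firstn (lcp x y) x = firstn (lcp x y) y.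
Proof.
  revert y; induction x; destruct y; simpl; auto. destruct leq_dec; subst; simpl; auto. rewrite IHx; auto.
Qed.
Lemma lcp_app_same p x y : lcp (p ++ x) (p ++ y) = length p + lcp x y.
Proof. induction p; simpl; auto. destruct leq_dec; congruence. Qed.
Lemma lcp_prefix_app a v k t : lcp a v < k -> k <= length v -> lcp a (firstn k v ++ t) = lcp a v.
Proof.
  revert v k; induction a as [|x a IH]; intros v k H1 H2; simpl; auto.
  destruct v as [|y v]; simpl in *; [lia|]. destruct k as [|k]; [lia|]. simpl.
  destruct leq_dec; auto. rewrite IH; auto; lia.
Qed.
Lemma lcp_ge x y k : k <= length x -> k <= length y -> firstn k x = firstn k y -> k <= lcp x y.
Proof.
  revert y k; induction x as [|a x IH]; intros y k H1 H2 H3; simpl in *. lia.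
  destruct y as [|b y]; simpl in *; [lia|]. destruct k; [lia|]. simpl in H3. injection H3 as E1 E2. subst b.
  destruct leq_dec; [|congruence]. specialize (IH y k ltac:(lia) ltac:(lia) E2). lia.
Qed.

Lemma reduced_app_l x y : reduced (x ++ y) -> reduced x.
Proof.
  induction x as [|a x IH]; simpl; auto. intros [H1 H2]. split; auto.
  destruct x; simpl in *; auto.
Qed.
Lemma reduced_app_r x y : reduced (x ++ y) -> reduced y.
Proof. induction x as [|a x IH]; simpl; auto. intros [H1 H2]; auto. Qed.
Lemma reduced_mid x b c y : reduced (x ++ b :: c :: y) -> c <> linv b.
Proof. induction x as [|a x IH]; simpl; [tauto|]. intros [_ H]; auto. Qed.

Lemma act_formula x y : reduced x -> reduced y ->
  act x y = firstn (length x - lcp (winv x) y) x ++ skipn (lcp (winv x) y) y.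
Proof.
  revert y. induction x as [|a x IH] using rev_ind; intros y Hx Hy.
  - simpl. auto.
  - destruct y as [|b y'].
    { rewrite act_nil_r by auto. destruct (winv (x ++ [a])); simpl;
      rewrite Nat.sub_0_r, firstn_all, app_nil_r; auto. }
    rewrite act_app, winv_app. simpl. rewrite length_app. simpl.
    assert (Hx' : reduced x) by (eapply reduced_app_l; eauto).
    + simpl. destruct (leq_dec b (linv a)) as [E|E].
      * subst b. destruct (leq_dec (linv a) (linv a)); [|congruence].
        rewrite IH by first [assumption | eapply reduced_tail; eauto].
        simpl. rewrite firstn_app.
        assert (lcp (winv x) y' <= length x) by (pose proof (lcp_le_l (winv x) y'); rewrite winv_length in *; lia).
        replace (length x + 1 - S (lcp (winv x) y') - length x) with 0 by lia.
        simpl. rewrite app_nil_r. f_equal. f_equal. lia.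
      * destruct (leq_dec (linv a) b) as [E'|E']; [congruence|].
        rewrite IH.
        2: auto.
        2: { apply reduced_cons; auto. intros c w' Ew; inversion Ew; subst; auto. }
        assert (Z : lcp (winv x) (a :: b :: y') = 0).
        { destruct x as [|d x''] using rev_ind; [reflexivity|].
          rewrite winv_app. simpl. destruct leq_dec as [e|e]; auto.
          exfalso. rewrite <- app_assoc in Hx. simpl in Hx. apply reduced_mid in Hx.
          apply Hx. congruence. }
        rewrite Z. simpl. rewrite !Nat.sub_0_r, firstn_all.
        rewrite firstn_all2 by (rewrite length_app; simpl; lia).
        rewrite <- app_assoc. auto.
Qed.

Lemma act_length x y : reduced x -> reduced y ->
  length (act x y) + 2 * lcp (winv x) y = length x + length y.
Proof.
  intros Hx Hy. rewrite act_formula by auto. rewrite length_app, length_firstn, length_skipn.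
  pose proof (lcp_le_l (winv x) y). pose proof (lcp_le_r (winv x) y). rewrite winv_length in *. lia.
Qed.

Lemma reduced_nth v j d : reduced v -> S j < length v -> nth (S j) v d <> linv (nth j v d).
Proof.
  revert j; induction v as [|a v IH]; intros j H Hl; simpl in *; [lia|].
  destruct j.
  - destruct v as [|b v]; simpl in *; [lia|]. tauto.
  - apply IH; [tauto| lia].
Qed.

Lemma nth_winv v j d : j < length v -> nth j (winv v) d = linv (nth (length v - S j) v d).
Proof.
  intros H. unfold winv. rewrite rev_nth by (rewrite length_map; auto).
  rewrite length_map. rewrite nth_indep with (d' := linv d) by (rewrite length_map; lia).
  apply map_nth.
Qed.

Lemma lcp_inv_self v : reduced v -> v <> [] -> 2 * lcp (winv v) v < length v.
Proof.
  intros Hr Hn. set (a := lcp (winv v) v). set (n := length v).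
  assert (n > 0) by (destruct v; simpl in *; [congruence| unfold n; simpl; lia]).
  destruct (Nat.lt_ge_cases (2*a) n) as [L|L]; auto. exfalso.
  pose (d := (0, true) : letter).
  assert (K : forall j, j < a -> nth j v d = linv (nth (n - S j) v d)).
  { intros j Hj. rewrite <- lcp_nth with (x := winv v) by auto.
    apply nth_winv. pose proof (lcp_le_r (winv v) v). unfold a, n in *; lia. }
  destruct (Nat.Even_or_Odd n) as [[t Ht]|[t Ht]].
  - assert (t - 1 < a) by lia. specialize (K (t-1) H0).
    replace (n - S (t-1)) with t in K by lia.
    apply (reduced_nth v (t-1) d Hr). unfold n in *; lia.
    replace (S (t-1)) with t by lia. rewrite K, linv_inv. auto.
  - assert (t < a) by lia. specialize (K t H0). replace (n - S t) with t in K by lia.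
    apply (linv_neq (nth t v d)). auto.
Qed.

Lemma reduced_inv_app s : reduced (winv s ++ s) -> s = [].
Proof.
  destruct s as [|a s]; auto. rewrite winv_cons, <- app_assoc. simpl. intro H.
  apply reduced_mid in H. rewrite linv_inv in H. congruence.
Qed.


Definition bounded (n : nat) (w : word) : Prop := forall l, In l w -> fst l < n.

Lemma in_push l a w : In l (push a w) -> l = a \/ In l w.
Proof.
  destruct w as [|b w]; simpl; [intros [H|[]]; auto|]. destruct leq_dec; simpl; [tauto| intros [H|H]; auto].
Qed.
Lemma in_act l u v : In l (act u v) -> In l u \/ In l v.
Proof.
  induction u as [|a u IH]; simpl; [tauto|]. intros H. apply in_push in H.
  destruct H as [H|H]; [subst; tauto|]. apply IH in H; tauto.
Qed.
Lemma in_winv l w : In l (winv w) -> In (linv l) w.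
Proof.
  unfold winv. intros H. apply in_rev in H. apply in_map_iff in H.
  destruct H as [x [E H]]. subst. rewrite linv_inv. auto.
Qed.
Lemma bounded_act n u v : bounded n u -> bounded n v -> bounded n (act u v).
Proof. intros H1 H2 l H. apply in_act in H. destruct H; auto. Qed.
Lemma bounded_winv n w : bounded n w -> bounded n (winv w).
Proof. intros H l Hl. apply in_winv in Hl. apply H in Hl. destruct l; simpl in *; auto. Qed.
Lemma bounded_firstn n k w : bounded n w -> bounded n (firstn k w).
Proof. intros H l Hl. apply H. rewrite <- (firstn_skipn k w). apply in_app_iff; auto. Qed.
Lemma bounded_skipn n k w : bounded n w -> bounded n (skipn k w).
Proof. intros H l Hl. apply H. rewrite <- (firstn_skipn k w). apply in_app_iff; auto. Qed.
Lemma bounded_app n u v : bounded n u -> bounded n v -> bounded n (u ++ v).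
Proof. intros H1 H2 l Hl. apply in_app_iff in Hl. destruct Hl; auto. Qed.

Inductive gen (Zs : list word) : word -> Prop :=
| gen_nil : gen Zs []
| gen_l : forall z x, In z Zs -> gen Zs x -> gen Zs (act z x)
| gen_li : forall z x, In z Zs -> gen Zs x -> gen Zs (act (winv z) x).

Definition allred (Zs : list word) := forall z, In z Zs -> reduced z.

Lemma gen_red Zs x : allred Zs -> gen Zs x -> reduced x.
Proof. intros HZ H; induction H; simpl; auto; apply act_red; auto. Qed.

Lemma gen_mul Zs x y : allred Zs -> gen Zs x -> gen Zs y -> gen Zs (act x y).
Proof.
  intros HZ Hx Hy. induction Hx; simpl; auto.
  - rewrite act_assoc by (eapply gen_red; eauto). apply gen_l; auto.
  - rewrite act_assoc by (eapply gen_red; eauto). apply gen_li; auto.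
Qed.

Lemma gen_single Zs z : allred Zs -> In z Zs -> gen Zs z.
Proof. intros HZ H. rewrite <- (act_nil_r z) by auto. apply gen_l; auto. constructor. Qed.
Lemma gen_single_inv Zs z : allred Zs -> In z Zs -> gen Zs (winv z).
Proof. intros HZ H. rewrite <- (act_nil_r (winv z)) by (apply winv_red; auto). apply gen_li; auto. constructor. Qed.

Lemma gen_inv Zs x : allred Zs -> gen Zs x -> gen Zs (winv x).
Proof.
  intros HZ Hx. induction Hx.
  - constructor.
  - rewrite winv_act by (auto; eapply gen_red; eauto). apply gen_mul; auto. apply gen_single_inv; auto.
  - rewrite winv_act by (try apply winv_red; auto; eapply gen_red; eauto).
    rewrite winv_winv. apply gen_mul; auto. apply gen_single; auto.
Qed.

Lemma gen_sub Zs Zs' x : allred Zs' -> (forall z, In z Zs -> gen Zs' z) -> gen Zs x -> gen Zs' x.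
Proof.
  intros HZ Hs Hx. induction Hx. constructor.
  - apply gen_mul; auto.
  - apply gen_mul; auto. apply gen_inv; auto.
Qed.

Definition val (Zs : list word) (p : letter) : word :=
  if snd p then nth (fst p) Zs [] else winv (nth (fst p) Zs []).

Lemma val_linv Zs p : val Zs (linv p) = winv (val Zs p).
Proof. destruct p as [i []]; unfold val, linv; simpl; auto. rewrite winv_winv; auto. Qed.

Lemma val_gen Zs p : allred Zs -> fst p < length Zs -> gen Zs (val Zs p).
Proof.
  intros HZ H. unfold val. destruct (snd p).
  - apply gen_single; auto. apply nth_In; auto.
  - apply gen_single_inv; auto. apply nth_In; auto.
Qed.

Lemma val_red Zs p : allred Zs -> fst p < length Zs -> reduced (val Zs p).
Proof. intros. eapply gen_red; eauto. apply val_gen; auto. Qed.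

Lemma val_length Zs p : length (val Zs p) = length (nth (fst p) Zs []).
Proof. unfold val; destruct (snd p); auto. apply winv_length. Qed.

Fixpoint upd (Zs : list word) (j : nat) (z : word) : list word :=
  match Zs, j with
  | [], _ => []
  | _ :: Zs', 0 => z :: Zs'
  | y :: Zs', S j' => y :: upd Zs' j' z
  end.
Fixpoint rem (Zs : list word) (j : nat) : list word :=
  match Zs, j with
  | [], _ => []
  | _ :: Zs', 0 => Zs'
  | y :: Zs', S j' => y :: rem Zs' j'
  end.
Fixpoint listsum (g : word -> nat) (Zs : list word) : nat :=
  match Zs with [] => 0 | z :: Zs' => g z + listsum g Zs' end.

Lemma upd_length Zs j z : length (upd Zs j z) = length Zs.
Proof. revert j; induction Zs; destruct j; simpl; auto. Qed.
Lemma upd_nth_eq Zs j z : j < length Zs -> nth j (upd Zs j z) [] = z.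
Proof. revert j; induction Zs; destruct j; simpl; intros; try lia; auto. apply IHZs; lia. Qed.
Lemma upd_nth_neq Zs j z i : i <> j -> nth i (upd Zs j z) [] = nth i Zs [].
Proof. revert i j; induction Zs; destruct i, j; simpl; intros; auto; lia. Qed.
Lemma upd_in Zs j z x : In x (upd Zs j z) -> x = z \/ In x Zs.
Proof.
  revert j; induction Zs as [|y Zs IH]; intros j H; destruct j; simpl in H; try tauto.
  - destruct H as [H|H]; [left; auto| right; right; auto].
  - destruct H as [H|H]; [right; left; auto|]. apply IH in H. simpl. tauto.
Qed.
Lemma upd_sum g Zs j z : j < length Zs -> listsum g (upd Zs j z) + g (nth j Zs []) = listsum g Zs + g z.
Proof. revert j; induction Zs; destruct j; simpl; intros; try lia. specialize (IHZs j ltac:(lia)). lia. Qed.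
Lemma rem_length Zs j : j < length Zs -> S (length (rem Zs j)) = length Zs.
Proof. revert j; induction Zs; destruct j; simpl; intros; try lia. rewrite IHZs; lia. Qed.
Lemma rem_sum g Zs j : j < length Zs -> listsum g (rem Zs j) + g (nth j Zs []) = listsum g Zs.
Proof. revert j; induction Zs; destruct j; simpl; intros; try lia. specialize (IHZs j ltac:(lia)). lia. Qed.
Lemma rem_in Zs j x : In x (rem Zs j) -> In x Zs.
Proof.
  revert j; induction Zs as [|y Zs IH]; intros j H; destruct j; simpl in H; try tauto.
  - simpl; tauto.
  - destruct H as [H|H]; [left; auto|]. apply IH in H. simpl. tauto.
Qed.
Lemma rem_in2 Zs j x : In x Zs -> x = nth j Zs [] \/ In x (rem Zs j).
Proof.
  revert j; induction Zs as [|y Zs IH]; intros j H; destruct j; simpl in H |- *; try tauto.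
  - destruct H as [H|H]; [left; auto| right; auto].
  - destruct H as [H|H]; [right; left; auto|]. apply (IH j) in H. tauto.
Qed.
Lemma in_pos (Zs : list word) x : In x Zs -> exists i, i < length Zs /\ nth i Zs [] = x.
Proof. intros H. apply (In_nth _ _ []) in H. destruct H as [i [H1 H2]]. eauto. Qed.


Definition code (l : letter) : nat := 2 * fst l + (if snd l then 1 else 0).
Fixpoint fcode (B : nat) (w : word) : nat :=
  match w with [] => 0 | l :: w' => code l * B ^ length w' + fcode B w' end.
Definition half (w : word) : word := firstn ((length w + 1) / 2) w.
Definition mu (B : nat) (w : word) : nat := fcode B (half w) + fcode B (half (winv w)).
Definition Tm (Zs : list word) : nat := listsum (@length letter) Zs.
Definition Mm (B : nat) (Zs : list word) : nat := listsum (mu B) Zs + length Zs.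
Definition cand (n K : nat) (Ys Zs : list word) : Prop :=
  length Zs <= K /\ (forall z, In z Zs -> reduced z /\ bounded n z) /\
  (forall x, gen Zs x <-> gen Ys x).
Definition minimal (n K : nat) (Ys Zs : list word) : Prop :=
  cand n K Ys Zs /\ forall Zs', cand n K Ys Zs' ->
    Tm Zs <= Tm Zs' /\ (Tm Zs' = Tm Zs -> Mm (2*n+2) Zs <= Mm (2*n+2) Zs').

Lemma mu_winv B w : mu B (winv w) = mu B w.
Proof. unfold mu. rewrite winv_winv. lia. Qed.

Lemma min_nat (Q : nat -> Prop) : (exists m, Q m) -> exists m, Q m /\ forall k, Q k -> m <= k.
Proof.
  intros [m Hm]. apply NNPP. intro Hno.
  assert (forall m, forall k, k <= m -> ~ Q k).
  { induction m0 as [|m0 IH]; intros k Hk HQ.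
    - apply Hno. exists k. split; auto. intros; lia.
    - destruct (Nat.eq_dec k (S m0)) as [E|E]; [|apply (IH k); auto; lia].
      subst k. apply Hno. exists (S m0). split; auto. intros k' Hk'.
      destruct (Nat.le_gt_cases (S m0) k'); auto. exfalso. apply (IH k'); auto; lia. }
  apply (H m m); auto.
Qed.

Lemma exists_minimal n K Ys : cand n K Ys Ys -> exists Zs, minimal n K Ys Zs.
Proof.
  intros HY.
  destruct (min_nat (fun t => exists Zs, cand n K Ys Zs /\ Tm Zs = t)) as [t0 [[Z0 [HZ0 HT0]] Hmin0]].
  { exists (Tm Ys); eauto. }
  destruct (min_nat (fun m => exists Zs, cand n K Ys Zs /\ Tm Zs = t0 /\ Mm (2*n+2) Zs = m))
    as [m0 [[Z1 [HZ1 [HT1 HM1]]] Hmin1]].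
  { exists (Mm (2*n+2) Z0); eauto. }
  exists Z1. split; auto. intros Zs' HZ'. split.
  - rewrite HT1. apply Hmin0. eauto.
  - intros E. rewrite HM1. apply Hmin1. exists Zs'. split; auto. split; auto. lia.
Qed.

Lemma val_bounded n Zs p : (forall z, In z Zs -> bounded n z) -> fst p < length Zs -> bounded n (val Zs p).
Proof.
  intros H Hp. unfold val. destruct (snd p); [|apply bounded_winv]; apply H, nth_In; auto.
Qed.

Lemma val_upd_neq Zs j z p : fst p <> j -> val (upd Zs j z) p = val Zs p.
Proof. intros H. unfold val. rewrite upd_nth_neq; auto. Qed.

Lemma min_move n K Ys Zs p q : minimal n K Ys Zs ->
  fst p < length Zs -> fst q < length Zs -> fst p <> fst q ->
  length (val Zs q) <= length (act (val Zs p) (val Zs q)) /\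
  (length (val Zs q) = length (act (val Zs p) (val Zs q)) ->
   mu (2*n+2) (val Zs q) <= mu (2*n+2) (act (val Zs p) (val Zs q))).
Proof.
  intros [[HK [Hok Hgen]] Hmin] Hp Hq Hpq.
  assert (AR : allred Zs) by (intros z Hz; apply Hok; auto).
  set (y := val Zs q). set (g := val Zs p). set (y' := act g y).
  assert (Hy : reduced y) by (apply val_red; auto).
  assert (Hg : reduced g) by (apply val_red; auto).
  assert (Hy' : reduced y') by (apply act_red; auto).
  set (z' := if snd q then y' else winv y').
  set (Zs' := upd Zs (fst q) z').
  assert (Hz'r : reduced z') by (unfold z'; destruct (snd q); auto using winv_red).
  assert (Hz'b : bounded n z').
  { assert (bounded n y').
    { apply bounded_act; apply val_bounded; auto; intros; apply Hok; auto. }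
    unfold z'; destruct (snd q); auto using bounded_winv. }
  assert (Hok' : forall z, In z Zs' -> reduced z /\ bounded n z).
  { intros z Hz. apply upd_in in Hz. destruct Hz as [->|Hz]; auto. }
  assert (AR' : allred Zs') by (intros z Hz; apply Hok'; auto).
  assert (Hlen' : length Zs' = length Zs) by apply upd_length.
  assert (Vq : val Zs' q = y').
  { unfold val at 1. unfold Zs'. rewrite upd_nth_eq by auto. unfold z'.
    destruct (snd q); auto. apply winv_winv. }
  assert (Vp : val Zs' p = g) by (unfold Zs'; apply val_upd_neq; auto).
  assert (G1 : forall x, gen Zs' x -> gen Zs x).
  { intros x0; apply gen_sub; auto. intros z Hz. apply upd_in in Hz. destruct Hz as [->|Hz].
    - assert (gen Zs y') by (apply gen_mul; auto; apply val_gen; auto).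
      unfold z'; destruct (snd q); auto. apply gen_inv; auto.
    - apply gen_single; auto. }
  assert (G2 : forall x, gen Zs x -> gen Zs' x).
  { intros x0; apply gen_sub; auto. intros z Hz. apply in_pos in Hz. destruct Hz as [i [Hi <-]].
    destruct (Nat.eq_dec i (fst q)) as [E|E].
    - subst i.
      assert (Ey : y = act (winv g) y').
      { unfold y'. rewrite <- act_assoc by auto. rewrite act_inv_l by auto. reflexivity. }
      assert (gen Zs' y).
      { rewrite Ey. apply gen_mul; auto. apply gen_inv; auto. rewrite <- Vp. apply val_gen; auto; lia.
        rewrite <- Vq. apply val_gen; auto; lia. }
      unfold y, val in H. destruct (snd q); auto.
      rewrite <- (winv_winv (nth (fst q) Zs [])). apply gen_inv; auto.
    - apply gen_single; auto. rewrite <- (upd_nth_neq Zs (fst q) z' i) by auto.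
      apply nth_In. rewrite Hlen'; auto. }
  assert (Hc : cand n K Ys Zs').
  { split; [lia|]. split; auto. intros x. rewrite <- Hgen. split; auto. }
  destruct (Hmin Zs' Hc) as [T1 T2].
  pose proof (upd_sum (@length letter) Zs (fst q) z' Hq) as S1.
  pose proof (upd_sum (mu (2*n+2)) Zs (fst q) z' Hq) as S2.
  assert (L1 : length z' = length y') by (unfold z'; destruct (snd q); auto; apply winv_length).
  assert (L2 : length (nth (fst q) Zs []) = length y) by (unfold y; rewrite val_length; auto).
  assert (M1 : mu (2*n+2) z' = mu (2*n+2) y') by (unfold z'; destruct (snd q); auto; apply mu_winv).
  assert (M2 : mu (2*n+2) (nth (fst q) Zs []) = mu (2*n+2) y).
  { unfold y, val. destruct (snd q); auto. rewrite mu_winv; auto. }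
  unfold Tm, Mm in *. fold Zs' in S1, S2. split.
  - lia.
  - intros E. specialize (T2 ltac:(lia)). lia.
Qed.

Lemma no_empty n K Ys Zs i : minimal n K Ys Zs -> i < length Zs -> nth i Zs [] <> [].
Proof.
  intros [[HK [Hok Hgen]] Hmin] Hi E.
  assert (AR : allred Zs) by (intros z Hz; apply Hok; auto).
  set (Zs' := rem Zs i).
  assert (AR' : allred Zs') by (intros z Hz; apply AR; eapply rem_in; eauto).
  assert (Hc : cand n K Ys Zs').
  { pose proof (rem_length Zs i Hi). split; [unfold Zs'; lia|]. split.
    - intros z Hz. apply Hok. eapply rem_in; eauto.
    - intros x. rewrite <- Hgen. split.
      + apply gen_sub; auto. intros z Hz. apply gen_single; auto. eapply rem_in; eauto.
      + apply gen_sub; auto. intros z Hz. apply (rem_in2 _ i) in Hz. destruct Hz as [Hz|Hz].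
        * assert (Ez : z = []) by (rewrite Hz; exact E). rewrite Ez; constructor.
        * apply gen_single; auto. }
  destruct (Hmin Zs' Hc) as [T1 T2].
  pose proof (rem_sum (@length letter) Zs i Hi) as S1.
  pose proof (rem_sum (mu (2*n+2)) Zs i Hi) as S2.
  pose proof (rem_length Zs i Hi).
  rewrite E in S1, S2. simpl in S1.
  assert (mu (2*n+2) [] = 0) by reflexivity.
  unfold Tm, Mm in *. fold Zs' in S1, S2, H. specialize (T2 ltac:(lia)). lia.
Qed.


Lemma code_inj l l' : code l = code l' -> l = l'.
Proof. destruct l as [i []], l' as [j []]; unfold code; simpl; intros; f_equal; lia. Qed.

Lemma code_lt n l : fst l < n -> code l < 2*n+2.
Proof. destruct l as [i []]; unfold code; simpl; lia. Qed.

Lemma fcode_lt n w : bounded n w -> fcode (2*n+2) w < (2*n+2) ^ length w.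
Proof.
  induction w as [|l w IH]; intros H; [simpl; lia|].
  cbn [fcode length]. rewrite Nat.pow_succ_r'.
  assert (bounded n w) by (intros x Hx; apply H; simpl; auto).
  specialize (IH H0). pose proof (code_lt n l (H l (or_introl eq_refl))).
  set (P := (2*n+2) ^ length w) in *. nia.
Qed.

Lemma fcode_app B a c : fcode B (a ++ c) = fcode B a * B ^ length c + fcode B c.
Proof.
  induction a as [|l a IH]; simpl; auto. rewrite IH, length_app, Nat.pow_add_r. ring.
Qed.

Lemma divmod_uniq a a' r r' M : r < M -> r' < M -> a * M + r = a' * M + r' -> a = a' /\ r = r'.
Proof.
  intros H1 H2 E. destruct (Nat.lt_trichotomy a a') as [L|[L|L]].
  - exfalso. assert (a * M + M <= a' * M) by nia. lia.
  - subst. lia.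
  - exfalso. assert (a' * M + M <= a * M) by nia. lia.
Qed.

Lemma fcode_inj n p q : bounded n p -> bounded n q -> length p = length q ->
  fcode (2*n+2) p = fcode (2*n+2) q -> p = q.
Proof.
  revert q; induction p as [|l p IH]; intros q Hp Hq Hl E; destruct q as [|l' q]; simpl in *; try lia; auto.
  assert (bp : bounded n p) by (intros x Hx; apply Hp; simpl; auto).
  assert (bq : bounded n q) by (intros x Hx; apply Hq; simpl; auto).
  injection Hl as Hl. rewrite Hl in E.
  pose proof (fcode_lt n p bp). pose proof (fcode_lt n q bq). rewrite Hl in *.
  apply divmod_uniq in E; auto. destruct E as [E1 E2]. apply code_inj in E1. subst.
  f_equal. apply IH; auto.
Qed.

Lemma mu_lt n P Q r : bounded n P -> bounded n Q -> bounded n r -> length P = length Q ->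
  2 * length P <= length (P ++ r) ->
  fcode (2*n+2) Q < fcode (2*n+2) P -> mu (2*n+2) (Q ++ r) < mu (2*n+2) (P ++ r).
Proof.
  intros bP bQ br HL H2 Hlt. rewrite length_app in H2.
  unfold mu, half. rewrite !winv_length, !length_app, HL.
  set (hl := (length Q + length r + 1) / 2).
  pose proof (Nat.div_mod (length Q + length r + 1) 2 ltac:(lia)).
  pose proof (Nat.mod_upper_bound (length Q + length r + 1) 2 ltac:(lia)).
  fold hl in H, H0.
  assert (Hh1 : length Q <= hl) by lia.
  assert (Hh2 : hl <= length r) by lia.
  rewrite !winv_app, !firstn_app, !winv_length.
  replace (hl - length r) with 0 by lia. rewrite !firstn_O, !app_nil_r.
  rewrite (firstn_all2 P) by lia. rewrite (firstn_all2 Q) by lia. rewrite !fcode_app.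
  set (k := length (firstn (hl - length Q) r)).
  pose proof (fcode_lt n (firstn (hl - length Q) r) (bounded_firstn _ _ _ br)). fold k in H1.
  assert (fcode (2*n+2) Q * (2*n+2) ^ k + (2*n+2) ^ k <= fcode (2*n+2) P * (2*n+2) ^ k) by nia.
  rewrite HL. fold k. lia.
Qed.


Lemma val_nonempty n K Ys Zs p : minimal n K Ys Zs -> fst p < length Zs -> val Zs p <> [].
Proof.
  intros Hm Hp E. apply (no_empty n K Ys Zs (fst p)); auto. unfold val in E.
  destruct (snd p); auto. rewrite <- (winv_winv (nth (fst p) Zs [])), E. reflexivity.
Qed.

Lemma cond1 n K Ys Zs pu pv : minimal n K Ys Zs ->
  fst pu < length Zs -> fst pv < length Zs -> pu <> pv ->
  2 * lcp (val Zs pu) (val Zs pv) <= length (val Zs pv) /\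
  2 * lcp (val Zs pu) (val Zs pv) <= length (val Zs pu).
Proof.
  intros Hm Hu Hv Huv.
  assert (AR : allred Zs) by (intros z Hz; apply Hm; auto).
  assert (Ru : reduced (val Zs pu)) by (apply val_red; auto).
  assert (Rv : reduced (val Zs pv)) by (apply val_red; auto).
  destruct (Nat.eq_dec (fst pu) (fst pv)) as [E|E].
  - assert (pu = linv pv).
    { destruct pu as [i e], pv as [j f]; unfold linv; simpl in *; subst.
      destruct e, f; simpl; congruence. }
    subst pu. rewrite val_linv in *.
    assert (NE : val Zs pv <> []) by (apply (val_nonempty n K Ys); auto).
    pose proof (lcp_inv_self _ Rv NE). rewrite winv_length. lia.
  - destruct (min_move n K Ys Zs (linv pu) pv Hm) as [A1 _]; auto.
    destruct (min_move n K Ys Zs (linv pv) pu Hm) as [A2 _]; auto.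
    rewrite val_linv in A1, A2.
    pose proof (act_length _ _ (winv_red _ Ru) Rv). pose proof (act_length _ _ (winv_red _ Rv) Ru).
    rewrite winv_winv, winv_length in *. rewrite lcp_sym in H0. lia.
Qed.


Lemma val_bnd n K Ys Zs p : minimal n K Ys Zs -> fst p < length Zs -> bounded n (val Zs p).
Proof. intros Hm Hp. apply val_bounded; auto. intros z Hz. apply Hm; auto. Qed.

Lemma cond2 n K Ys Zs pu pv pw : minimal n K Ys Zs ->
  fst pu < length Zs -> fst pv < length Zs -> fst pw < length Zs ->
  pu <> pv -> pw <> linv pv ->
  lcp (val Zs pu) (val Zs pv) + lcp (val Zs pw) (winv (val Zs pv)) < length (val Zs pv).
Proof.
  intros Hm Hu Hv Hw Huv Hwv.
  assert (AR : allred Zs) by (intros z Hz; apply Hm; auto).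
  set (u := val Zs pu). set (v := val Zs pv). set (w := val Zs pw).
  assert (Ru : reduced u) by (apply val_red; auto).
  assert (Rv : reduced v) by (apply val_red; auto).
  assert (Rw : reduced w) by (apply val_red; auto).
  assert (NE : v <> []) by (apply (val_nonempty n K Ys); auto).
  destruct (cond1 n K Ys Zs pu pv Hm) as [A1 A2]; auto.
  assert (Hlv : fst (linv pv) < length Zs) by (destruct pv; auto).
  assert (Hwv' : pw <> linv pv) by auto.
  destruct (cond1 n K Ys Zs pw (linv pv) Hm) as [B1 B2]; auto.
  rewrite val_linv in B1, B2. fold u v w in A1, A2, B1, B2. rewrite winv_length in B1.
  set (a := lcp u v) in *. set (b := lcp w (winv v)) in *.
  destruct (Nat.lt_ge_cases (a + b) (length v)) as [L|L]; auto. exfalso.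
  set (h := a).
  assert (Ha : 2 * a = length v) by lia. assert (Hb : b = a) by lia.
  assert (Iu : fst pu <> fst pv).
  { intro E. assert (pu = linv pv).
    { destruct pu as [i e], pv as [j f]; unfold linv; simpl in *; subst.
      destruct e, f; simpl; congruence. }
    assert (u = winv v) by (unfold u, v; rewrite H; apply val_linv).
    pose proof (lcp_inv_self v Rv NE). unfold a in Ha. rewrite H0 in Ha. lia. }
  assert (Iw : fst pw <> fst pv).
  { intro E. assert (pw = pv).
    { destruct pw as [i e], pv as [j f]; unfold linv in *; simpl in *; subst.
      destruct e, f; simpl in *; congruence. }
    assert (w = v) by (unfold w, v; rewrite H; auto).
    pose proof (lcp_inv_self v Rv NE). unfold b in Hb. rewrite H0, lcp_sym in Hb. lia. }
  assert (bu : bounded n u) by (apply (val_bnd n K Ys Zs); auto).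
  assert (bv : bounded n v) by (apply (val_bnd n K Ys Zs); auto).
  assert (bw : bounded n w) by (apply (val_bnd n K Ys Zs); auto).
  set (P := firstn a v). set (Q := firstn a (winv v)).
  assert (LP : length P = a) by (unfold P; rewrite length_firstn; lia).
  assert (LQ : length Q = a) by (unfold Q; rewrite length_firstn, winv_length; lia).
  assert (Pu : firstn a u = P) by (unfold P, a; apply lcp_firstn).
  assert (Qw : firstn a w = Q).
  { unfold Q. rewrite <- Hb at 1 2. unfold b. apply lcp_firstn. }
  assert (bP : bounded n P) by (apply bounded_firstn; auto).
  assert (bQ : bounded n Q) by (apply bounded_firstn, bounded_winv; auto).
  destruct (lt_eq_lt_dec (fcode (2*n+2) Q) (fcode (2*n+2) P)) as [[C|C]|C].
  - (* move u := v^-1 u *)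
    destruct (min_move n K Ys Zs (linv pv) pu Hm) as [M1 M2]; auto.
    rewrite val_linv in M1, M2. fold u v in M1, M2.
    rewrite act_formula in M1, M2 by (auto using winv_red). rewrite winv_winv, winv_length in M1, M2.
    rewrite (lcp_sym v u) in M1, M2. fold a in M1, M2.
    replace (length v - a) with a in M1, M2 by lia. fold Q in M1, M2.
    assert (Eu : u = P ++ skipn a u) by (rewrite <- Pu; symmetry; apply firstn_skipn).
    assert (Lu : length (Q ++ skipn a u) = length u).
    { rewrite length_app, length_skipn, LQ. lia. }
    specialize (M2 (eq_sym Lu)).
    assert (mu (2*n+2) (Q ++ skipn a u) < mu (2*n+2) (P ++ skipn a u)).
    { apply mu_lt; auto. apply bounded_skipn; auto. lia. rewrite <- Eu. lia. }
    rewrite <- Eu in H. lia.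
  -
    assert (P = Q) by (apply (fcode_inj n); auto; lia).
    set (S := skipn a v).
    assert (Ev : v = P ++ S) by (symmetry; apply firstn_skipn).
    assert (LS : length S = a) by (unfold S; rewrite length_skipn; lia).
    assert (Q = winv S).
    { unfold Q. rewrite Ev, winv_app. rewrite firstn_app, winv_length, LS.
      replace (a - a) with 0 by lia. rewrite firstn_O, app_nil_r. apply firstn_all2.
      rewrite winv_length; lia. }
    rewrite H, H0 in Ev. rewrite Ev in Rv. apply reduced_inv_app in Rv.
    subst S. rewrite Rv in LS. simpl in LS. apply NE. destruct v; simpl in *; auto. lia.
  - (* move w := v w *)
    destruct (min_move n K Ys Zs pv pw Hm) as [M1 M2]; auto.
    fold v w in M1, M2.
    rewrite act_formula in M1, M2 by auto. rewrite (lcp_sym (winv v) w) in M1, M2. fold b in M1, M2. rewrite Hb in M1, M2.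
    replace (length v - a) with a in M1, M2 by lia. fold P in M1, M2.
    assert (Ew : w = Q ++ skipn a w) by (rewrite <- Qw; symmetry; apply firstn_skipn).
    assert (Lw : length (P ++ skipn a w) = length w).
    { rewrite length_app, length_skipn, LP. lia. }
    specialize (M2 (eq_sym Lw)).
    assert (mu (2*n+2) (P ++ skipn a w) < mu (2*n+2) (Q ++ skipn a w)).
    { apply mu_lt; auto. apply bounded_skipn; auto. lia. rewrite <- Ew. lia. }
    rewrite <- Ew in H. lia.
Qed.


Definition Rw (Zs : list word) (ws : word) : word :=
  fold_right (fun l acc => act (val Zs l) acc) [] ws.

Lemma Rw_red Zs ws : reduced (Rw Zs ws).
Proof. induction ws; simpl; auto. apply act_red; auto. Qed.

Definition cnext (Zs : list word) (l : letter) (rest : word) : nat :=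
  match rest with [] => 0 | l' :: _ => lcp (winv (val Zs l)) (val Zs l') end.

Lemma free_aux n K Ys Zs : minimal n K Ys Zs -> forall rest l,
  reduced (l :: rest) -> bounded (length Zs) (l :: rest) ->
  cnext Zs l rest < length (val Zs l) /\
  exists t, Rw Zs (l :: rest) = firstn (length (val Zs l) - cnext Zs l rest) (val Zs l) ++ t.
Proof.
  intros Hm. assert (AR : allred Zs) by (intros z Hz; apply Hm; auto).
  induction rest as [|l' rest IH]; intros l Hr Hb.
  - assert (Hl : fst l < length Zs) by (apply Hb; simpl; auto).
    pose proof (val_nonempty n K Ys Zs l Hm Hl). simpl.
    split. destruct (val Zs l); simpl; [congruence|lia].
    exists []. rewrite act_nil_r by (apply val_red; auto). rewrite Nat.sub_0_r, firstn_all, app_nil_r. auto.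
  - assert (Hl : fst l < length Zs) by (apply Hb; simpl; auto).
    assert (Hl' : fst l' < length Zs) by (apply Hb; simpl; auto).
    assert (Hr' : reduced (l' :: rest)) by (eapply reduced_tail; eauto).
    assert (Hb' : bounded (length Zs) (l' :: rest)) by (intros x Hx; apply Hb; simpl; auto).
    destruct (IH l' Hr' Hb') as [Hc' [t' Et']].
    assert (Hll' : l' <> linv l) by (destruct Hr; auto).
    assert (Hl1 : linv l <> l').
    { intro E. apply Hll'. symmetry. exact E. }
    assert (Hlv : fst (linv l) < length Zs) by (destruct l; auto).
    set (x := val Zs l) in *. set (v' := val Zs l') in *.
    set (c := lcp (winv x) v').
    assert (NEx : x <> []) by (apply (val_nonempty n K Ys); auto).
    assert (NEv : v' <> []) by (apply (val_nonempty n K Ys); auto).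
    assert (Ccx : c < length x).
    { destruct (cond1 n K Ys Zs l' (linv l) Hm) as [C _]; auto.
      rewrite val_linv in C. fold x v' in C. rewrite winv_length in C. unfold c. rewrite lcp_sym.
      destruct x; simpl in *; [congruence|lia]. }
    assert (Ccc : c + cnext Zs l' rest < length v').
    { destruct rest as [|l'' rest'].
      - simpl. destruct (cond1 n K Ys Zs (linv l) l' Hm) as [C _]; auto.
        rewrite val_linv in C. fold x v' in C. unfold c. destruct v'; simpl in *; [congruence|lia].
      - assert (Hl'' : fst l'' < length Zs) by (apply Hb; simpl; auto).
        assert (Hr'' : l'' <> linv l') by (destruct Hr as [_ [Hr _]]; auto).
        pose proof (cond2 n K Ys Zs (linv l) l' l'' Hm Hlv Hl' Hl'' Hl1 Hr'') as C.
        rewrite val_linv in C. fold x v' in C. simpl. fold v'. rewrite (lcp_sym (winv v')). unfold c. lia. }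
    split; [simpl; fold x v'; auto|].
    change (Rw Zs (l :: l' :: rest)) with (act x (Rw Zs (l' :: rest))).
    rewrite act_formula by (auto using Rw_red; apply val_red; auto).
    assert (E : lcp (winv x) (Rw Zs (l' :: rest)) = c).
    { rewrite Et'. apply lcp_prefix_app; fold v'; lia. }
    rewrite E. simpl cnext. fold x v'. fold c. eauto.
Qed.

Lemma free_R n K Ys Zs ws : minimal n K Ys Zs -> reduced ws -> bounded (length Zs) ws ->
  ws <> [] -> Rw Zs ws <> [].
Proof.
  intros Hm Hr Hb Hn. destruct ws as [|l rest]; [congruence|].
  destruct (free_aux n K Ys Zs Hm rest l Hr Hb) as [C [t E]]. rewrite E.
  destruct (length (val Zs l) - cnext Zs l rest) as [|k] eqn:Q; [lia|].
  destruct (val Zs l) as [|a x]; simpl; [simpl in C; lia| congruence].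
Qed.


Lemma inv_unique (G : group) (a b : G) : gmul G a b = gone G -> a = ginv G b.
Proof.
  intros H. rewrite <- (gmulx1 G a). rewrite <- (gmulxV G b). rewrite gmulA, H. apply gmul1x.
Qed.
Lemma hom_one (G H : group) (f : G -> H) : is_hom G H f -> f (gone G) = gone H.
Proof.
  intros Hf. pose proof (Hf (gone G) (gone G)) as E. rewrite gmul1x in E.
  assert (gmul H (f (gone G)) (ginv H (f (gone G))) = gmul H (gmul H (f (gone G)) (f (gone G))) (ginv H (f (gone G)))) by (rewrite <- E; auto).
  rewrite gmulxV, <- gmulA, gmulxV, gmulx1 in H0. auto.
Qed.
Lemma hom_inv (G H : group) (f : G -> H) x : is_hom G H f -> f (ginv G x) = ginv H (f x).
Proof.
  intros Hf. apply inv_unique. rewrite <- Hf, gmulVx. apply hom_one; auto.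
Qed.
Lemma hom_comp (G H K : group) (f : G -> H) (g : H -> K) : is_hom G H f -> is_hom H K g -> is_hom G K (fun x => g (f x)).
Proof. intros Hf Hg x y. rewrite Hf, Hg. auto. Qed.
Lemma hom_id (G : group) : is_hom G G (fun x => x).
Proof. intros x y; auto. Qed.

Lemma iso_refl G : isomorphic G G.
Proof. exists (fun x => x), (fun x => x). repeat split; auto using hom_id. Qed.
Lemma iso_sym G H : isomorphic G H -> isomorphic H G.
Proof. intros [f [g [A [B [C D]]]]]. exists g, f. tauto. Qed.
Lemma iso_trans G H K : isomorphic G H -> isomorphic H K -> isomorphic G K.
Proof.
  intros [f [g [A [B [C D]]]]] [f' [g' [A' [B' [C' D']]]]].
  exists (fun x => f' (f x)), (fun z => g (g' z)). repeat split; auto using hom_comp.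
  - intros x. rewrite C', C. auto.
  - intros y. rewrite D, D'. auto.
Qed.
Lemma iso_retract G H : isomorphic G H -> retract G H.
Proof. intros [f [g [A [B [C D]]]]]. exists f, g. tauto. Qed.
Lemma retract_trans X A B : retract X A -> retract A B -> retract X B.
Proof.
  intros [f [g [A1 [B1 C1]]]] [f' [g' [A2 [B2 C2]]]].
  exists (fun x => f' (f x)), (fun z => g (g' z)). repeat split; auto using hom_comp.
  intros x. rewrite C2, C1. auto.
Qed.

Definition okw (n : nat) (w : word) : Prop := reduced w /\ bounded n w.
Definition Wc (n : nat) : Type := {w : word | okw n w}.

Lemma okw_act n x y : okw n x -> okw n y -> okw n (act x y).
Proof. intros [] []. split; [apply act_red | apply bounded_act]; auto. Qed.
Lemma okw_winv n x : okw n x -> okw n (winv x).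
Proof. intros []. split; [apply winv_red | apply bounded_winv]; auto. Qed.
Lemma okw_nil n : okw n [].
Proof. split; simpl; auto. intros l []. Qed.

Definition Wmul n (x y : Wc n) : Wc n :=
  exist _ (act (proj1_sig x) (proj1_sig y)) (okw_act n _ _ (proj2_sig x) (proj2_sig y)).
Definition Winv n (x : Wc n) : Wc n := exist _ (winv (proj1_sig x)) (okw_winv n _ (proj2_sig x)).
Definition Wone n : Wc n := exist _ [] (okw_nil n).

Lemma Weq n (x y : Wc n) : proj1_sig x = proj1_sig y -> x = y.
Proof. destruct x as [x Hx], y as [y Hy]; simpl; intros ->. f_equal. apply proof_irrelevance. Qed.

Lemma W_assoc n (x y z : Wc n) : Wmul n x (Wmul n y z) = Wmul n (Wmul n x y) z.
Proof. apply Weq; simpl. symmetry. apply act_assoc. apply (proj2_sig z). Qed.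
Lemma W_1x n (x : Wc n) : Wmul n (Wone n) x = x.
Proof. apply Weq; simpl. auto. Qed.
Lemma W_x1 n (x : Wc n) : Wmul n x (Wone n) = x.
Proof. apply Weq; simpl. apply act_nil_r, (proj2_sig x). Qed.
Lemma W_Vx n (x : Wc n) : Wmul n (Winv n x) x = Wone n.
Proof. apply Weq; simpl. apply act_inv_l, (proj2_sig x). Qed.
Lemma W_xV n (x : Wc n) : Wmul n x (Winv n x) = Wone n.
Proof. apply Weq; simpl. apply act_inv_r, (proj2_sig x). Qed.

Definition W (n : nat) : group :=
  Group (Wc n) (Wmul n) (Winv n) (Wone n) (W_assoc n) (W_1x n) (W_x1 n) (W_Vx n) (W_xV n).

Lemma okw_single n (l : letter) : fst l < n -> okw n [l].
Proof. intros H. split; simpl; auto. intros x [<-|[]]; auto. Qed.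

Definition wgen (n i : nat) : W n :=
  match lt_dec i n with
  | left H => exist _ [(i, true)] (okw_single n (i, true) H)
  | right _ => Wone n
  end.

Definition sgn (G : group) (phi : nat -> G) (l : letter) : G :=
  if snd l then phi (fst l) else ginv G (phi (fst l)).
Definition evalG (G : group) (phi : nat -> G) (w : word) : G :=
  fold_right (fun l acc => gmul G (sgn G phi l) acc) (gone G) w.

Lemma evalG_push G phi a w : evalG G phi (push a w) = gmul G (sgn G phi a) (evalG G phi w).
Proof.
  destruct w as [|b w]; simpl; auto.
  destruct leq_dec as [E|E]; simpl; auto. subst b.
  rewrite gmulA. unfold sgn, linv; simpl. destruct (snd a); simpl.
  - rewrite gmulxV, gmul1x; auto.
  - rewrite gmulVx, gmul1x; auto.
Qed.
Lemma evalG_act G phi u v : evalG G phi (act u v) = gmul G (evalG G phi u) (evalG G phi v).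
Proof.
  induction u as [|a u IH]; simpl. rewrite gmul1x; auto.
  rewrite evalG_push, IH, gmulA. auto.
Qed.

Lemma W_free n : free_on (W n) n (wgen n).
Proof.
  intros G phi. split.
  - exists (fun x : W n => evalG G phi (proj1_sig x)). split.
    + intros x y. simpl. apply evalG_act.
    + intros i Hi. unfold wgen. destruct lt_dec; [|lia]. simpl. unfold sgn; simpl. apply gmulx1.
  - intros h1 h2 H1 H2 Hg x. destruct x as [l Hl].
    revert Hl. induction l as [|a l IH]; intros Hl.
    + match goal with |- h1 ?X = _ => assert (E : X = gone (W n)) by (apply Weq; auto); rewrite E end.
      rewrite !hom_one; auto.
    + assert (Hl' : okw n l).
      { destruct Hl as [R B]. split; [eapply reduced_tail; eauto| intros x Hx; apply B; simpl; auto]. }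
      assert (Ha : fst a < n) by (apply (proj2 Hl); simpl; auto).
      set (ga := wgen n (fst a)).
      match goal with |- h1 ?X = _ => assert (E : X =
                  gmul (W n) (if snd a then ga else ginv (W n) ga) (exist _ l Hl')) end.
      { apply Weq. unfold ga, wgen. destruct lt_dec; [|lia]. destruct a as [i []]; simpl.
        - destruct l as [|b l]; simpl; auto. destruct leq_dec; auto. destruct Hl as [[R _] _]. congruence.
        - destruct l as [|b l]; simpl; auto. destruct leq_dec; auto. destruct Hl as [[R _] _]. rewrite ?linv_inv in e. unfold linv in *; simpl in *. congruence. }
      rewrite E, H1, H2, IH. f_equal.
      destruct (snd a); [apply Hg; auto|]. rewrite !hom_inv; auto. f_equal. apply Hg; auto.
Qed.

Lemma free_unique_hom (F : group) k b (h : F -> F) : free_on F k b -> is_hom F F h ->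
  (forall i, i < k -> h (b i) = b i) -> forall x, h x = x.
Proof.
  intros Hf Hh Hb x. destruct (Hf F b) as [_ U]. apply (U h (fun x => x)); auto using hom_id.
Qed.

Lemma free_iso (G H : group) k b c : free_on G k b -> free_on H k c -> isomorphic G H.
Proof.
  intros HG HH. destruct (HG H c) as [[f [Hf Ef]] _]. destruct (HH G b) as [[g [Hg Eg]] _].
  exists f, g. repeat split; auto.
  - apply (free_unique_hom G k b); auto using hom_comp. intros i Hi. rewrite Ef, Eg; auto.
  - apply (free_unique_hom H k c); auto using hom_comp. intros i Hi. rewrite Eg, Ef; auto.
Qed.

Lemma W_retract_le j j' : j <= j' -> retract (W j) (W j').
Proof.
  intros Hjj. destruct (W_free j (W j') (wgen j')) as [[f [Hf Ef]] _].
  destruct (W_free j' (W j) (wgen j)) as [[g [Hg Eg]] _].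
  exists f, g. repeat split; auto.
  apply (free_unique_hom (W j) j (wgen j)); auto using hom_comp, W_free.
  intros i Hi. rewrite Ef, Eg; auto. lia.
Qed.


Lemma xorb_A (x y z : bool) : xorb x (xorb y z) = xorb (xorb x y) z.
Proof. destruct x, y, z; auto. Qed.
Lemma xorb_1x (x : bool) : xorb false x = x. Proof. destruct x; auto. Qed.
Lemma xorb_x1 (x : bool) : xorb x false = x. Proof. destruct x; auto. Qed.
Lemma xorb_Vx (x : bool) : xorb x x = false. Proof. destruct x; auto. Qed.
Definition Z2 : group := Group bool xorb (fun x => x) false xorb_A xorb_1x xorb_x1 xorb_Vx xorb_Vx.

Fixpoint allb (k : nat) : list (list bool) :=
  match k with 0 => [[]] | S k => map (cons true) (allb k) ++ map (cons false) (allb k) end.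

Lemma allb_length k : length (allb k) = 2 ^ k.
Proof. induction k; simpl; auto. rewrite length_app, !length_map. lia. Qed.
Lemma allb_in k l : In l (allb k) <-> length l = k.
Proof.
  revert l; induction k; intros l; simpl.
  - split; [intros [<-|[]]; auto| destruct l; simpl; try discriminate; auto].
  - rewrite in_app_iff, !in_map_iff. split.
    + intros [[x [<- H]]|[x [<- H]]]; apply IHk in H; simpl; auto.
    + destruct l as [|c l]; simpl; [discriminate|]. intros E. injection E as E.
      destruct c; [left|right]; exists l; split; auto; apply IHk; auto.
Qed.
Lemma nodup_map_inj {A B} (f : A -> B) l : NoDup l -> (forall x y, In x l -> In y l -> f x = f y -> x = y) -> NoDup (map f l).
Proof.
  induction l as [|a l IH]; intros H Hi; simpl; constructor.
  - intros Hin. apply in_map_iff in Hin. destruct Hin as [x [E Hx]].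
    inversion H; subst. assert (x = a) by (apply Hi; simpl; auto). subst; contradiction.
  - inversion H; subst. apply IH; auto. intros; apply Hi; simpl; auto.
Qed.

Lemma allb_nodup k : NoDup (allb k).
Proof.
  induction k; simpl. constructor; [intros []|constructor].
  apply NoDup_app.
  - apply nodup_map_inj; auto. intros x y _ _ E; injection E; auto.
  - apply nodup_map_inj; auto. intros x y _ _ E; injection E; auto.
  - intros x H1 H2. apply in_map_iff in H1, H2. destruct H1 as [? [<- _]], H2 as [? [E _]]. discriminate.
Qed.

Lemma nth_map_seq {A} (F : nat -> A) a i d : i < a -> nth i (map F (seq 0 a)) d = F i.
Proof.
  intros. rewrite nth_indep with (d' := F 0) by (rewrite length_map, length_seq; auto).
  rewrite map_nth, seq_nth; auto.
Qed.

Definition chi (b : nat) (l : list bool) (x : W b) : Z2 :=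
  evalG Z2 (fun i => nth i l false) (proj1_sig x).
Lemma chi_hom b l : is_hom (W b) Z2 (chi b l).
Proof. intros x y. unfold chi. exact (evalG_act Z2 _ _ _). Qed.
Lemma chi_gen b l i : i < b -> chi b l (wgen b i) = nth i l false.
Proof. intros H. unfold chi, wgen. destruct lt_dec; [|lia]. simpl. unfold sgn; simpl. apply xorb_x1. Qed.

Lemma W_rank_lt a b : a < b -> isomorphic (W a) (W b) -> False.
Proof.
  intros Hab [f [g [Hf [Hg [E1 E2]]]]].
  set (xi := fun l => map (fun i => chi b l (f (wgen a i))) (seq 0 a)).
  assert (Inj : forall l l', length l = b -> length l' = b -> xi l = xi l' -> l = l').
  { intros l l' L L' E.
    assert (Ag : forall x, chi b l (f x) = chi b l' (f x)).
    { destruct (W_free a Z2 (fun i => chi b l (f (wgen a i)))) as [_ U].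
      apply U; auto using hom_comp, chi_hom.
      intros i Hi. assert (nth i (xi l) false = nth i (xi l') false) by (rewrite E; auto).
      unfold xi in H. rewrite !nth_map_seq in H by auto. auto. }
    apply nth_ext with (d := false) (d' := false); [congruence|]. intros i Hi.
    rewrite <- !chi_gen with (b := b) by lia. rewrite <- (E2 (wgen b i)). apply Ag. }
  assert (ND : NoDup (map xi (allb b))).
  { apply nodup_map_inj; [apply allb_nodup|]. intros x y Hx Hy. apply allb_in in Hx, Hy. auto. }
  assert (Inc : incl (map xi (allb b)) (allb a)).
  { intros z Hz. apply in_map_iff in Hz. destruct Hz as [l [<- _]]. apply allb_in.
    unfold xi. rewrite length_map, length_seq. auto. }
  pose proof (NoDup_incl_length ND Inc). rewrite length_map, !allb_length in H.
  pose proof (Nat.pow_lt_mono_r 2 a b ltac:(lia) Hab). lia.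
Qed.

Lemma W_rank a b : isomorphic (W a) (W b) -> a = b.
Proof.
  intros H. destruct (lt_eq_lt_dec a b) as [[L|L]|L]; auto.
  - exfalso; eapply W_rank_lt; eauto.
  - exfalso; eapply W_rank_lt; eauto. apply iso_sym; auto.
Qed.


Lemma W_induction n (P : W n -> Prop) :
  P (gone (W n)) ->
  (forall i x, i < n -> P x -> P (gmul (W n) (wgen n i) x)) ->
  (forall i x, i < n -> P x -> P (gmul (W n) (ginv (W n) (wgen n i)) x)) ->
  forall x, P x.
Proof.
  intros H0 H1 H2 x. destruct x as [l Hl]. revert Hl. induction l as [|a l IH]; intros Hl.
  - match goal with |- P ?X => assert (E : X = gone (W n)) by (apply Weq; auto); rewrite E end. auto.
  - assert (Hl' : okw n l).
    { destruct Hl as [R B]. split; [eapply reduced_tail; eauto| intros x Hx; apply B; simpl; auto]. }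
    assert (Ha : fst a < n) by (apply (proj2 Hl); simpl; auto).
    set (ga := wgen n (fst a)).
    match goal with |- P ?X => assert (E : X =
                gmul (W n) (if snd a then ga else ginv (W n) ga) (exist _ l Hl')) end.
    { apply Weq. unfold ga, wgen. destruct lt_dec; [|lia]. destruct a as [i []]; simpl.
      - destruct l as [|b l]; simpl; auto. destruct leq_dec; auto.
        destruct Hl as [[R _] _]. rewrite ?linv_inv in e. unfold linv in *; simpl in *. congruence.
      - destruct l as [|b l]; simpl; auto. destruct leq_dec; auto.
        destruct Hl as [[R _] _]. rewrite ?linv_inv in e. unfold linv in *; simpl in *. congruence. }
    rewrite E. destruct (snd a); [apply H1|apply H2]; auto.
Qed.

Lemma mul_inv_one (G : group) (a b : G) : gmul G a (ginv G b) = gone G -> a = b.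
Proof.
  intros H. rewrite <- (gmulx1 G a), <- (gmulVx G b), gmulA, H. apply gmul1x.
Qed.

Lemma raw_mul n (x y : W n) : proj1_sig (gmul (W n) x y) = act (proj1_sig x) (proj1_sig y).
Proof. reflexivity. Qed.
Lemma raw_inv n (x : W n) : proj1_sig (ginv (W n) x) = winv (proj1_sig x).
Proof. reflexivity. Qed.
Lemma raw_one n : proj1_sig (gone (W n)) = [].
Proof. reflexivity. Qed.
Lemma raw_gen n i : i < n -> proj1_sig (wgen n i) = [(i, true)].
Proof. intros H. unfold wgen. destruct lt_dec; [|lia]. reflexivity. Qed.

Lemma Rw_push Zs a w : allred Zs -> fst a < length Zs ->
  Rw Zs (push a w) = act (val Zs a) (Rw Zs w).
Proof.
  intros AR Ha. destruct w as [|b w]; simpl; auto.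
  destruct leq_dec as [E|E]; simpl; auto. subst b.
  rewrite <- act_assoc by apply Rw_red. rewrite val_linv, act_inv_r by (apply val_red; auto). auto.
Qed.

Lemma Rw_gen Zs ws : allred Zs -> bounded (length Zs) ws -> gen Zs (Rw Zs ws).
Proof.
  intros AR. induction ws as [|a ws IH]; intros Hb; simpl. constructor.
  assert (Ha : fst a < length Zs) by (apply Hb; simpl; auto).
  apply gen_mul; auto. apply val_gen; auto. apply IH. intros x Hx; apply Hb; simpl; auto.
Qed.

Lemma retract_W (X : group) n : retract X (W n) -> exists m, m <= n /\ isomorphic X (W m).
Proof.
  intros [f [g [Hf [Hg Egf]]]].
  set (e := fun y => f (g y)).
  assert (He : is_hom (W n) (W n) e) by (unfold e; apply (hom_comp _ X); auto).
  assert (Hee : forall y, e (e y) = e y) by (intros; unfold e; rewrite Egf; auto).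
  set (Ys := map (fun i => proj1_sig (e (wgen n i))) (seq 0 n)).
  assert (HYs : forall y, In y Ys -> reduced y /\ bounded n y).
  { intros y Hy. unfold Ys in Hy. apply in_map_iff in Hy. destruct Hy as [i [<- _]].
    apply (proj2_sig (e (wgen n i))). }
  assert (ARY : allred Ys) by (intros y Hy; apply HYs; auto).
  assert (InY : forall i, i < n -> In (proj1_sig (e (wgen n i))) Ys).
  { intros i Hi. unfold Ys. apply (in_map (fun i => proj1_sig (e (wgen n i)))). apply in_seq. lia. }
  assert (CA : forall y, gen Ys (proj1_sig (e y))).
  { apply W_induction.
    - rewrite hom_one; auto. constructor.
    - intros i x Hi IH. rewrite He, raw_mul. apply gen_l; auto.
    - intros i x Hi IH. rewrite He, raw_mul, hom_inv, raw_inv; auto. apply gen_li; auto. }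
  assert (CB : forall x, gen Ys x -> exists y : W n, proj1_sig y = x /\ e y = y).
  { intros x Hx. induction Hx as [|z x Hz Hx IH|z x Hz Hx IH].
    - exists (gone (W n)). split; auto. apply hom_one; auto.
    - destruct IH as [y [Ey Fy]]. unfold Ys in Hz. apply in_map_iff in Hz. destruct Hz as [i [<- _]].
      exists (gmul (W n) (e (wgen n i)) y). split. rewrite raw_mul, Ey; auto.
      rewrite He, Hee, Fy. auto.
    - destruct IH as [y [Ey Fy]]. unfold Ys in Hz. apply in_map_iff in Hz. destruct Hz as [i [<- _]].
      exists (gmul (W n) (ginv (W n) (e (wgen n i))) y). split. rewrite raw_mul, raw_inv, Ey; auto.
      rewrite He, hom_inv, Hee, Fy; auto. }
  destruct (exists_minimal n (length Ys) Ys) as [Zs Hm].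
  { split; auto. split; auto. tauto. }
  pose proof Hm as [[HK [HZok HZgen]] _].
  assert (ARZ : allred Zs) by (intros z Hz; apply HZok; auto).
  set (m := length Zs).
  assert (Hmn : m <= n) by (unfold m; unfold Ys in HK; rewrite length_map, length_seq in HK; auto).
  assert (okz : forall i (H : i < m), okw n (nth i Zs [])).
  { intros i H. apply HZok. apply nth_In. auto. }
  set (zel := fun i => match lt_dec i m with
                        | left H => exist (fun w => okw n w) (nth i Zs []) (okz i H)
                        | right _ => Wone n end : W n).
  assert (Rz : forall i, i < m -> proj1_sig (zel i) = nth i Zs []).
  { intros i Hi. unfold zel. destruct lt_dec; [auto|lia]. }
  destruct (W_free m (W n) zel) as [[psi [Hpsi Epsi]] _].
  assert (CC : forall w, proj1_sig (psi w) = Rw Zs (proj1_sig w)).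
  { apply W_induction.
    - rewrite hom_one; auto.
    - intros i x Hi IH. rewrite Hpsi, !raw_mul, Epsi, IH, raw_gen, Rz by auto.
      simpl act. rewrite Rw_push; auto.
    - intros i x Hi IH. rewrite Hpsi, hom_inv, !raw_mul, !raw_inv, Epsi, IH, raw_gen, Rz by auto.
      simpl. rewrite Rw_push; auto. }
  assert (CD : forall w1 w2, psi w1 = psi w2 -> w1 = w2).
  { intros w1 w2 E. apply mul_inv_one.
    set (d := gmul (W m) w1 (ginv (W m) w2)).
    assert (Pd : psi d = gone (W n)).
    { unfold d. rewrite Hpsi, hom_inv, E by auto. apply gmulxV. }
    apply Weq. rewrite raw_one. destruct (proj1_sig d) as [|a l] eqn:Ed; auto. exfalso.
    apply (free_R n (length Ys) Ys Zs (proj1_sig d) Hm).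
    - apply (proj2_sig d).
    - apply (proj2_sig d).
    - rewrite Ed; discriminate.
    - rewrite <- CC, Pd. auto. }
  assert (CE : forall y, e y = y -> exists w, psi w = y).
  { intros y Ey. assert (G : gen Zs (proj1_sig y)) by (apply HZgen; rewrite <- Ey; auto).
    assert (forall x, gen Zs x -> exists w, proj1_sig (psi w) = x).
    { intros x Hx. induction Hx as [|z x Hz Hx IH|z x Hz Hx IH].
      - exists (gone (W m)). rewrite hom_one; auto.
      - destruct IH as [w Ew]. apply in_pos in Hz. destruct Hz as [i [Hi <-]].
        exists (gmul (W m) (wgen m i) w). rewrite Hpsi, raw_mul, Epsi, Ew, Rz; auto.
      - destruct IH as [w Ew]. apply in_pos in Hz. destruct Hz as [i [Hi <-]].
        exists (gmul (W m) (ginv (W m) (wgen m i)) w). rewrite Hpsi, hom_inv, raw_mul, raw_inv, Epsi, Ew, Rz; auto. }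
    destruct (H _ G) as [w Ew]. exists w. apply Weq. auto. }
  assert (CF : forall w, e (psi w) = psi w).
  { intros w. assert (G : gen Ys (proj1_sig (psi w))).
    { apply HZgen. rewrite CC. apply Rw_gen; auto. apply (proj2_sig w). }
    destruct (CB _ G) as [y [Ey Fy]]. assert (y = psi w) by (apply Weq; auto). subst. auto. }
  assert (Ef : forall x, e (f x) = f x) by (intros; unfold e; rewrite Egf; auto).
  set (F := fun x => proj1_sig (constructive_indefinite_description _ (CE (f x) (Ef x)))).
  assert (EF : forall x, psi (F x) = f x).
  { intros x. unfold F. destruct constructive_indefinite_description; auto. }
  exists m. split; auto.
  exists F, (fun w => g (psi w)). repeat split.
  - intros x y. apply CD. rewrite Hpsi, !EF. apply Hf.
  - apply hom_comp; auto.
  - intros x. simpl. rewrite EF, Egf. auto.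
  - intros w. apply CD. rewrite EF. apply CF.
Qed.


Lemma retract_iso_r X A B : retract X A -> isomorphic A B -> retract X B.
Proof. intros H1 H2. eapply retract_trans; eauto. apply iso_retract; auto. Qed.
Lemma retract_iso_l X Y A : isomorphic X Y -> retract Y A -> retract X A.
Proof. intros H1 H2. eapply retract_trans; eauto. apply iso_retract; auto. Qed.

Lemma chain_bound k (F : group) n : isomorphic F (W k) -> chain F n -> n <= S k.
Proof.
  intros FW [X [H1 H2]]. destruct n as [|n]; [lia|].
  assert (C : forall i, 1 <= i -> i <= S n -> exists r, r + i <= S k /\ isomorphic (X i) (W r)).
  { induction i as [|i IH]; intros Hi1 Hi2; [lia|].
    destruct (Nat.eq_dec i 0) as [E|E].
    - subst i. assert (R1 : retract (X 1) (W k)) by (eapply retract_iso_r; eauto; apply H1; lia).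
      destruct (retract_W (X 1) k R1) as [r [Hr Ir]].
      exists r; split; auto; lia.
    - destruct IH as [r [Hr Ir]]; try lia.
      destruct (H2 i ltac:(lia) ltac:(lia)) as [R NI].
      assert (R1 : retract (X (S i)) (W r)) by (eapply retract_iso_r; eauto).
      destruct (retract_W (X (S i)) r R1) as [r' [Hr' Ir']].
      destruct (Nat.eq_dec r' r) as [Er|Er].
      + subst r'. exfalso. apply NI. eapply iso_trans; eauto. apply iso_sym; auto.
      + exists r'. split; auto. lia. }
  destruct (C (S n) ltac:(lia) ltac:(lia)) as [r [Hr _]]. lia.
Qed.

Theorem proposition3p5 (k : nat) (F : group) (b : nat -> F) :
  free_on F k b ->
  (strong_capacity F k /\ capacity F (S k)) /\
  (strong_depth F (S k) /\ depth F (S k)).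
Proof.
  intros Hfree.
  assert (FW : isomorphic F (W k)) by (eapply free_iso; eauto using W_free).
  assert (RW : forall X, retract X F -> exists m, m <= k /\ isomorphic X (W m)).
  { intros X H. apply retract_W. eapply retract_iso_r; eauto. }
  assert (Wret : forall j, j <= k -> retract (W j) F).
  { intros j Hj. eapply retract_iso_r. apply W_retract_le; eauto. apply iso_sym; auto. }
  assert (NR : forall j, j < k -> ~ retract F (W j)).
  { intros j Hj H. assert (R1 : retract (W k) (W j)) by (eapply retract_iso_l; eauto; apply iso_sym; auto).
    destruct (retract_W (W k) j R1) as [m [Hm Im]].
    apply W_rank in Im. lia. }
  split; split.
  - exists W. split; [|split].
    + intros i Hi. split; [apply Wret; lia | apply NR; auto].
    + intros i j _ _ H. apply W_rank; auto.
    + intros X [H1 H2]. destruct (RW X H1) as [m [Hm Im]]. exists m. split; auto.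
      destruct (Nat.eq_dec m k) as [E|E]; [|lia]. subst m. exfalso. apply H2.
      apply iso_retract. eapply iso_trans; eauto. apply iso_sym; auto.
  - exists W. split; [|split].
    + intros i Hi. apply Wret; lia.
    + intros i j _ _ H. apply W_rank; auto.
    + intros X H1. destruct (RW X H1) as [m [Hm Im]]. exists m. split; auto; lia.
  - split.
    + exists (fun i => W (S k - i)). split.
      * intros _. replace (S k - 1) with k by lia. apply Wret; lia.
      * intros i Hi1 Hi2. split.
        -- apply W_retract_le; lia.
        -- intros H. destruct (retract_W (W (S k - i)) (S k - S i) H) as [m [Hm Im]].
           apply W_rank in Im. lia.
    + intros m [X [H1 H2]]. apply (chain_bound k F); auto. exists X. split; auto.
      intros i Hi1 Hi2. destruct (H2 i Hi1 Hi2) as [A B]. split; auto.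
      intros I. apply B. apply iso_retract, iso_sym; auto.
  - split.
    + exists (fun i => W (S k - i)). split.
      * intros _. replace (S k - 1) with k by lia. apply Wret; lia.
      * intros i Hi1 Hi2. split.
        -- apply W_retract_le; lia.
        -- intros H. apply W_rank in H. lia.
    + intros m Hm. apply (chain_bound k F); auto.
Qed.
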